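(* Let $n,r\ge 1$ be integers with $n\ge 8r$, and let $k$ be an integer with $\frac n2+3r\le k\le\frac{3n}{4}$. Let $S\subset\binom{[n]}{k}$, and let $A\subset\binom{[n]}{k-r}\setminus\partial^{r}S$ be a distance-$(2r+1)$ code. Then \[\big|\partial^{3r}S\cup\partial^{2r}A\big|\ \ge\ |S|+\frac{n^r|A|}{4(2r)^{3r}}.\]
   Context: $[n]=\{1,\dots,n\}$ and $\binom{[n]}{m}$ denotes the family of $m$-element subsets of $[n]$. For a family $F\subset 2^{[n]}$ and an integer $t\ge1$, the $t$-fold shadow $\partial^{t}F$ is the family of all sets obtainable by deleting $t$ elements from some set in $F$ (i.e. $\{y: y\subset x \text{ for some } x\in F,\ |x\setminus y|=t\}$). A family $A\subset 2^{[n]}$ is a distance-$d$ code if $|x\,\triangle\, y|\ge d$ for all distinct $x,y\in A$, where $\triangle$ denotes symmetric difference. *)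

(* Defs.v *)
From mathcomp Require Import all_boot all_order all_algebra.
Set Implicit Arguments. Unset Strict Implicit. Unset Printing Implicit Defensive.

(* The ground set [n] is modelled by 'I_n; subsets of [n] are {set 'I_n}. *)

Definition binom (n m : nat) : {set {set 'I_n}} := [set x : {set 'I_n} | #|x| == m].

Definition shadow (n t : nat) (F : {set {set 'I_n}}) : {set {set 'I_n}} :=
  [set y : {set 'I_n} | [exists x in F, (y \subset x) && (#|x :\: y| == t)]].

Definition symdiff (n : nat) (x y : {set 'I_n}) : {set 'I_n} := (x :\: y) :|: (y :\: x).

Definition dist_code (n d : nat) (A : {set {set 'I_n}}) : Prop :=
  forall x y, x \in A -> y \in A -> x != y -> d <= #|symdiff x y|.

(* Main.v *)
Require Import Defs.
From mathcomp Require Import all_boot all_order all_algebra zify ring lra.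
Set Implicit Arguments. Unset Strict Implicit. Unset Printing Implicit Defensive.


Lemma ffact_le_exp N j : N ^_ j <= N ^ j.
Proof.
elim: j => [|j IH]; first by rewrite ffactn0 expn0.
by rewrite ffactnSr expnS mulnC leq_mul // leq_subr.
Qed.

Lemma bin_le_exp N j : 'C(N, j) <= N ^ j.
Proof.
apply: leq_trans (ffact_le_exp N j).
by rewrite -bin_ffact leq_pmulr // fact_gt0.
Qed.

Lemma exp_ffact_aux N r j : j <= r -> r <= N -> N ^ j * r ^_ j <= r ^ j * N ^_ j.
Proof.
move=> + rN; elim: j => [|j IH] hj; first by rewrite !ffactn0 !expn0.
rewrite !ffactnSr !expnS.
have h1 : N * (r - j) <= r * (N - j) by rewrite mulnBr mulnBr; nia.
have H := leq_mul (IH (ltnW hj)) h1.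
set a := N ^ j in H *; set b := r ^_ j in H *; set c := r ^ j in H *; set d := N ^_ j in H *.
set e := r - j in H *; set f := N - j in H *.
lia.
Qed.

Lemma bin_ge N r : r <= N -> N ^ r <= r ^ r * 'C(N, r).
Proof.
move=> rN; have := @exp_ffact_aux N r r (leqnn r) rN.
by rewrite ffactnn -bin_ffact mulnA leq_pmul2r // fact_gt0.
Qed.

Lemma num4 n k r : 0 < r -> n + 6 * r <= 2 * k ->
  n ^ r * 'C(n - (k - 3 * r), r) <= (2 * r) ^ (3 * r) * 'C(k - r, 2 * r).
Proof.
move=> r0 hk.
set l := k - 3 * r; set m := k - r.
have h1 : 'C(n - l, r) <= m ^ r.
  apply: leq_trans (bin_le_exp _ _) _; rewrite leq_exp2r //; lia.
have h2 : m ^ (2 * r) <= (2 * r) ^ (2 * r) * 'C(m, 2 * r) by apply: bin_ge; lia.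
have h3 : n ^ r <= (2 * r) ^ r * m ^ r by rewrite -expnMn leq_exp2r //; nia.
have e1 : (2 * r) ^ (3 * r) = (2 * r) ^ r * (2 * r) ^ (2 * r) by rewrite -expnD; congr (_ ^ _); lia.
have e2 : m ^ (2 * r) = m ^ r * m ^ r by rewrite -expnD; congr (_ ^ _); lia.
have p0 : 0 < (2 * r) ^ (2 * r) by rewrite expn_gt0; lia.
rewrite -(leq_pmul2l p0).
have H := leq_mul h3 h1.
have H2 := leq_mul (leqnn ((2 * r) ^ r)) h2.
rewrite e2 in H2.
rewrite e1.
have H3 := leq_mul (leqnn ((2 * r) ^ (2 * r))) H.
apply: leq_trans H3 _.
nia.
Qed.

Lemma num5 n k r : 0 < r -> n + 6 * r <= 2 * k ->
  n ^ r * 'C(3 * r, r) <= (2 * r) ^ (3 * r) * 'C(k - 3 * r + r, r).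
Proof.
move=> r0 hk.
set l := k - 3 * r.
have h1 : 'C(3 * r, r) <= (3 * r) ^ r by apply: bin_le_exp.
have h2 : (l + r) ^ r <= r ^ r * 'C(l + r, r) by apply: bin_ge; lia.
have hl : n <= 2 * (l + r) by rewrite /l; lia.
have h3 : (n * (3 * r) * r) ^ r <= (8 * r * r * r * (l + r)) ^ r.
  rewrite leq_exp2r //.
  have q1 : r * r * n <= r * r * (2 * (l + r)) by rewrite leq_mul2l hl orbT.
  have q2 : r * r * (2 * (l + r)) <= r * r * r * (2 * (l + r)) by rewrite leq_mul2r leq_pmulr // orbT.
  nia.
have e1 : (2 * r) ^ (3 * r) = (8 * r * r * r) ^ r.
  by rewrite mulnC expnM; congr (_ ^ _); rewrite expnS expnS expn1; lia.
have p0 : 0 < r ^ r by rewrite expn_gt0; lia.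
rewrite -(leq_pmul2l p0) e1.
rewrite !expnMn in h3.
have H := leq_mul (leqnn (n ^ r * r ^ r)) h1.
rewrite !expnMn in H.
have H2 := leq_mul (leqnn ((8 ^ r * r ^ r * r ^ r * r ^ r))) h2.
rewrite !expnMn.
lia.
Qed.

Section Comb.
Variable n : nat.
Local Notation T := 'I_n.

Lemma in_binom j (x : {set T}) : (x \in binom n j) = (#|x| == j).
Proof. by rewrite inE. Qed.

Lemma shadow_card t j (F : {set {set T}}) (y : {set T}) :
  F \subset binom n j -> y \in shadow t F -> #|y| = j - t.
Proof.
move=> hF; rewrite inE => /existsP [x /and3P [xF yx /eqP hxy]].
have := subsetP hF x xF; rewrite in_binom => /eqP hx.
rewrite cardsDS // in hxy; have := subset_leq_card yx; lia.
Qed.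

Lemma in_shadow t j (F : {set {set T}}) (x y : {set T}) :
  x \in F -> y \subset x -> #|x| = j -> #|y| + t = j -> y \in shadow t F.
Proof.
move=> xF yx hx hy; rewrite inE; apply/existsP; exists x.
rewrite xF yx cardsDS // hx; apply/eqP; lia.
Qed.

Lemma code_eq r m (A : {set {set T}}) (a b : {set T}) :
  dist_code (2 * r + 1) A -> a \in A -> b \in A -> #|a| = m -> #|b| = m ->
  m <= #|a :&: b| + r -> a = b.
Proof.
move=> hc aA bA ha hb hab.
case: (eqVneq a b) => // nab.
have := hc a b aA bA nab.
have h1 : #|symdiff a b| <= #|a :\: b| + #|b :\: a| by apply: leq_card_setU.
rewrite !cardsD in h1.
have e : #|b :&: a| = #|a :&: b| by rewrite setIC.
have := subset_leq_card (subsetIl a b).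
lia.
Qed.

Lemma card_U_disj (a w : {set T}) : w \subset ~: a -> #|a :|: w| = #|a| + #|w|.
Proof.
move=> wa; rewrite cardsU.
have -> : a :&: w = set0.
  apply/setP => z; rewrite !inE; apply/negbTE/negP => /andP[za zw].
  by move/subsetP: wa => /(_ _ zw); rewrite inE za.
by rewrite cards0 subn0.
Qed.

Lemma sumb (X : finType) (F : {set X}) (P : pred X) :
  \sum_(x in F) (P x : nat) = #|[set x in F | P x]|.
Proof.
rewrite -sum1_card [RHS]big_mkcond /= [LHS]big_mkcond /=.
apply: eq_bigr => x _; rewrite inE; by case: (x \in F); case: (P x).
Qed.

Lemma disjU_sub (y w : {set T}) : [disjoint y & w] -> (y :|: w) :\: y = w.
Proof.
move=> d; apply/setP => x; rewrite !inE.
case: (boolP (x \in w)) => xw /=; last by rewrite orbF andNb.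
by rewrite (disjointFl d xw) /=.
Qed.

Lemma setUDs (y x : {set T}) : y \subset x -> y :|: (x :\: y) = x.
Proof.
move=> yx; apply/setP => z; rewrite !inE.
case: (boolP (z \in y)) => zy /=; last by [].
by rewrite (subsetP yx _ zy).
Qed.

Lemma card_super (y : {set T}) (j : nat) :
  #|y| <= j ->
  #|[set x : {set T} | (#|x| == j) && (y \subset x)]| = 'C(n - #|y|, j - #|y|).
Proof.
move=> hyj.
have -> : [set x : {set T} | (#|x| == j) && (y \subset x)] =
   [set y :|: w | w in [set w : {set T} | w \subset ~: y & #|w| == j - #|y|]].
  apply/setP => x; rewrite inE; apply/andP/imsetP.
  - case=> /eqP hx yx; exists (x :\: y).
      rewrite inE; apply/andP; split.
        by apply/subsetP => z; rewrite !inE => /andP[].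
      by rewrite cardsDS // hx.
    by rewrite setUDs.
  - case=> w; rewrite inE => /andP [wc /eqP hw] ->; split; last exact: subsetUl.
    rewrite cardsU.
    have -> : y :&: w = set0.
      apply/setP => z; rewrite !inE; apply/negbTE/negP => /andP[zy zw].
      by move/subsetP: wc => /(_ _ zw); rewrite inE zy.
    by rewrite cards0 hw subn0; apply/eqP; lia.
rewrite card_in_imset.
  by rewrite cards_draws cardsCs card_ord setCK.
move=> w1 w2; rewrite !inE => /andP[h1 _] /andP[h2 _] e.
have d1 : [disjoint y & w1] by rewrite disjoint_sym disjoints_subset.
have d2 : [disjoint y & w2] by rewrite disjoint_sym disjoints_subset.
by rewrite -(disjU_sub d1) -(disjU_sub d2) e.
Qed.

Definition deg (F : {set {set T}}) (y : {set T}) := \sum_(x in F) (y \subset x : nat).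

Lemma deg_lev j (y : {set T}) : #|y| <= j ->
  deg (binom n j) y = 'C(n - #|y|, j - #|y|).
Proof.
move=> hy; rewrite /deg sumb -card_super //; apply: eq_card => x.
by rewrite !inE.
Qed.

Lemma deg_split (F G : {set {set T}}) (y : {set T}) : G \subset F ->
  deg F y = deg G y + deg (F :\: G) y.
Proof.
move=> GF; rewrite /deg (big_setID G) /=.
by rewrite (setIidPr GF).
Qed.


Variables (k r : nat) (S A : {set {set T}}).
Hypothesis hr : 0 < r.
Hypothesis hkn2 : n + 6 * r <= 2 * k.
Hypothesis hkn : k <= n.
Hypothesis hS : S \subset binom n k.
Hypothesis hA : A \subset binom n (k - r) :\: shadow r S.
Hypothesis hc : dist_code (2 * r + 1) A.

Local Notation l := (k - 3 * r).
Local Notation U := (shadow (3 * r) S :|: shadow (2 * r) A).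
Local Notation Sc := (binom n k :\: S).
Local Notation E := 'C(n - (k - 3 * r), 3 * r).

Lemma A_lev (a : {set T}) : a \in A -> #|a| = k - r.
Proof. by move/(subsetP hA); rewrite !inE => /andP[_ /eqP]. Qed.

Lemma A_nsh (a : {set T}) : a \in A -> a \notin shadow r S.
Proof. by move/(subsetP hA); rewrite !inE => /andP[]. Qed.

Lemma S_lev (s : {set T}) : s \in S -> #|s| = k.
Proof. by move/(subsetP hS); rewrite !inE => /eqP. Qed.

Lemma U_lev (y : {set T}) : y \in U -> #|y| = l.
Proof.
rewrite inE => /orP [] h.
  by rewrite (shadow_card hS h).
have hA' : A \subset binom n (k - r).
  by apply/subsetP => a /A_lev ha; rewrite inE ha.
rewrite (shadow_card hA' h); lia.
Qed.

Lemma x_nS (a x : {set T}) : a \in A -> a \subset x -> #|x| = k -> x \notin S.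
Proof.
move=> aA ax hx; apply/negP => xS.
have := A_nsh aA; rewrite (@in_shadow r k S x a) //.
rewrite (A_lev aA); lia.
Qed.

Lemma uniq_x (a b x : {set T}) : a \in A -> b \in A -> a \subset x -> b \subset x -> #|x| = k -> a = b.
Proof.
move=> aA bA ax bx hx.
apply: (@code_eq r (k - r) A) => //; try exact: A_lev.
have h1 := cardsUI a b.
have h2 : #|a :|: b| <= k by rewrite -hx; apply: subset_leq_card; rewrite subUset ax.
rewrite (A_lev aA) (A_lev bA) in h1; lia.
Qed.

Lemma F1 : #|U| * E = #|S| * 'C(k, l) + \sum_(y in U) deg Sc y.
Proof.
rewrite -sum_nat_const.
rewrite (eq_bigr (fun y => deg S y + deg Sc y)); last first.
  move=> y yU; rewrite -deg_split // deg_lev; rewrite (U_lev yU) //; last by lia.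
  congr 'C(_, _); lia.
rewrite big_split /=; congr (_ + _).
rewrite /deg exchange_big /= -sum_nat_const.
apply: eq_bigr => s sS; rewrite sumb -(S_lev sS) -cards_draws.
apply: eq_card => y; rewrite in_set [in RHS]in_set.
apply/idP/idP.
  by move=> /andP [yU ys]; rewrite ys /= (U_lev yU) (S_lev sS).
move=> /andP [ys /eqP hy]; rewrite ys andbT.
apply/setUP; left; apply: (@in_shadow (3 * r) k S s y) => //; first exact: S_lev.
rewrite hy (S_lev sS); lia.
Qed.

Lemma sum_in (X : finType) (F : {set X}) (g : X -> nat) :
  \sum_(x in F) g x = \sum_x (x \in F) * g x.
Proof.
rewrite big_mkcond /=; apply: eq_bigr => x _.
by case: (x \in F); rewrite ?mul1n ?mul0n.
Qed.

Lemma card_sum (X : finType) (F : {set X}) : #|F| = \sum_x (x \in F : nat).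
Proof. by rewrite -sum1_card big_mkcond. Qed.

Lemma packing (y : {set T}) : #|y| = l ->
  'C(2 * r, r) * #|[set a in A | y \subset a]| <= 'C(n - l, r).
Proof.
move=> hy.
set Ay := [set a in A | y \subset a].
pose R (a : {set T}) := [set Z : {set T} | (Z \subset a :\: y) && (#|Z| == r)].
have hR : forall a, a \in Ay -> #|R a| = 'C(2 * r, r).
  move=> a; rewrite inE => /andP [aA ya].
  rewrite /R cards_draws cardsDS // (A_lev aA) hy; congr 'C(_, _); lia.
have -> : 'C(2 * r, r) * #|Ay| = \sum_(a in Ay) #|R a|.
  by rewrite mulnC -sum_nat_const; apply: eq_bigr => a /hR ->.
have -> : 'C(n - l, r) = #|[set Z : {set T} | (Z \subset ~: y) && (#|Z| == r)]|.
  by rewrite cards_draws cardsCs card_ord setCK hy.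
rewrite (eq_bigr (fun a => \sum_Z (Z \in R a : nat))); last first.
  by move=> a _; rewrite card_sum.
rewrite exchange_big /= card_sum; apply: leq_sum => Z _.
rewrite sumb.
have key : forall a : {set T}, (a \in A) && (y \subset a) -> (Z \subset a :\: y) && (#|Z| == r) ->
   [/\ a \in A, y :|: Z \subset a, Z \subset ~: y & #|Z| = r].
  move=> a /andP [aA ya] /andP [Za /eqP hZ]; split => //.
    rewrite subUset ya /=; apply: subset_trans Za _; exact: subsetDl.
  apply: subset_trans Za _; apply/subsetP => z; rewrite !inE => /andP[]//.
case: (boolP (Z \in _)) => hZ /=.
  apply/card_le1_eqP => a b; rewrite !inE => /andP [ha hZa] /andP [hb hZb].
  have [aA ya Zy cZ] := key a ha hZa; have [bA yb _ _] := key b hb hZb.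
  apply: (@code_eq r (k - r) A) => //; try exact: A_lev.
  have h1 : #|y :|: Z| <= #|a :&: b| by apply: subset_leq_card; rewrite subsetI ya yb.
  rewrite card_U_disj // hy cZ in h1; rewrite setIC; lia.
rewrite leqn0 cards_eq0; apply/eqP/setP => a; rewrite !inE.
apply/negbTE/negP => /andP [ha hZa].
have [_ _ Zy cZ] := key a ha hZa.
by move: hZ; rewrite inE Zy cZ eqxx.
Qed.

Local Notation Ya a := [set y : {set T} | (y \subset a) && (#|y| == l)].

Lemma F2 : \sum_(a in A) \sum_(y in Ya a) deg Sc y + \sum_(a in A) \sum_(y in Ya a) deg S y
   = #|A| * ('C(k - r, l) * E).
Proof.
rewrite -big_split /= -sum_nat_const; apply: eq_bigr => a aA.
rewrite -big_split /=.
rewrite (eq_bigr (fun _ => E)); last first.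
  move=> y; rewrite inE => /andP [ya /eqP hy].
  rewrite addnC -deg_split // deg_lev hy //; last by lia.
  congr 'C(_, _); lia.
by rewrite sum_nat_const cards_draws (A_lev aA).
Qed.

Lemma F3 : 'C(2 * r, r) * (\sum_(a in A) \sum_(y in Ya a) deg Sc y)
   <= 'C(n - l, r) * \sum_(y in U) deg Sc y.
Proof.
rewrite (eq_bigr (fun a : {set T} => \sum_(y : {set T}) (y \in Ya a) * deg Sc y)); last by move=> a _; rewrite sum_in.
rewrite exchange_big /= sum_in !big_distrr /=; apply: leq_sum => y _.
rewrite -big_distrl /= sumb mulnA.
set c := #|_|.
have : c = 0 \/ [/\ y \in U, #|y| = l & c <= #|[set a in A | y \subset a]|].
  case: (posnP c) => [->|cpos]; first by left.
  right; move: cpos; rewrite card_gt0 => /set0Pn [a /setIdP [aA yYa]].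
  have /andP [ya /eqP hy] : (y \subset a) && (#|y| == l) by move: yYa; rewrite inE.
  split => //.
  - apply/setUP; right; apply: (@in_shadow (2 * r) (k - r) A a y) => //; first exact: A_lev.
    rewrite hy; lia.
  - apply: subset_leq_card; apply/subsetP => b; rewrite !inE => /andP [-> /andP [-> _]] //.
case=> [->|[yU hy hc']]; first by rewrite muln0 mul0n.
rewrite yU mul1n leq_mul2r; apply/orP; right.
apply: leq_trans (packing hy); rewrite leq_mul2l hc' orbT //.
Qed.

Local Notation Xa a := [set x : {set T} | (#|x| == k) && (a \subset x)].
Local Notation good a y x := [exists s in S, (y :|: (x :\: a)) \subset s].

Lemma deg_mono (F G : {set {set T}}) (y : {set T}) : G \subset F -> deg G y <= deg F y.
Proof. by move=> GF; rewrite (deg_split y GF) leq_addr. Qed.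

Lemma card_v (a y x : {set T}) : a \in A -> y \subset a -> #|y| = l -> #|x| = k -> a \subset x ->
  #|y :|: (x :\: a)| = l + r.
Proof.
move=> aA ya hy hx ax.
rewrite card_U_disj ?cardsDS // ?hx ?(A_lev aA) ?hy; first by lia.
apply/subsetP => z; rewrite !inE => /andP [za _]; apply/negP => zy.
by move: za; rewrite (subsetP ya _ zy).
Qed.

Lemma F3a (a : {set T}) : a \in A ->
  \sum_(y in Ya a) deg S y <= 'C(n - l - r, 2 * r) * \sum_(y in Ya a) \sum_(x in Xa a) (good a y x : nat).
Proof.
move=> aA; rewrite big_distrr /=; apply: leq_sum => y; rewrite inE => /andP [ya /eqP hy].
apply: (@leq_trans (\sum_(s in S) \sum_(x in Xa a) ((y :|: (x :\: a)) \subset s : nat))).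
  apply: leq_sum => s sS.
  case: (boolP (y \subset s)) => ys //=.
  have : 0 < #|[set W : {set T} | (W \subset s :\: a) && (#|W| == r)]|.
    rewrite cards_draws bin_gt0 cardsD (S_lev sS).
    have := subset_leq_card (subsetIr s a); rewrite (A_lev aA); lia.
  rewrite card_gt0 => /set0Pn [W]; rewrite inE => /andP [Ws /eqP hW].
  have Wa : W \subset ~: a.
    apply: subset_trans Ws _; apply/subsetP => z; rewrite !inE => /andP [] //.
  rewrite (bigD1 (a :|: W)) /=; last first.
    by rewrite inE card_U_disj // (A_lev aA) hW subsetUl andbT; apply/eqP; lia.
  rewrite setUC disjU_sub ?subUset ?ys //=.
    by rewrite (subset_trans Ws (subsetDl _ _)).
  by rewrite disjoint_sym disjoints_subset.
rewrite exchange_big /= big_distrr /=; apply: leq_sum => x; rewrite inE => /andP [/eqP hx ax].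
have hv := card_v aA ya hy hx ax.
case: (boolP (good a y x)) => hg /=.
  rewrite muln1; apply: leq_trans (deg_mono _ hS) _.
  rewrite deg_lev hv; last by lia.
  have -> : n - l - r = n - (l + r) by lia.
  have -> : k - (l + r) = 2 * r by lia.
  by [].
rewrite muln0 leqn0 /deg sumb cards_eq0; apply/eqP/setP => s; rewrite !inE.
apply/negbTE/negP => /andP [sS vs]; move/negP: hg; apply; apply/existsP; exists s; by rewrite sS vs.
Qed.

Lemma setDDs (a y : {set T}) : y \subset a -> a :\: (a :\: y) = y.
Proof.
move=> ya; apply/setP => z; rewrite !inE.
case: (boolP (z \in y)) => zy; first by rewrite (subsetP ya _ zy).
by case: (z \in a).
Qed.

Lemma keyK (a x z : {set T}) : a \in A -> x \in Xa a -> z \in U ->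
  \sum_(y in Ya a) (z \subset y :|: (x :\: a) : nat) <= 'C(3 * r, r) * (z \subset x).
Proof.
move=> aA; rewrite inE => /andP [/eqP hx ax] zU.
have hz := U_lev zU.
rewrite sumb.
case: (boolP (z \subset x)) => zx; last first.
  rewrite muln0 leqn0 cards_eq0; apply/eqP/setP => y; rewrite !inE.
  apply/negbTE/negP => /andP [/andP [ya _] zv]; move/negP: zx; apply.
  apply: subset_trans zv _; rewrite subUset (subset_trans ya ax) /=; exact: subsetDl.
rewrite muln1.
set Y := [set y in Ya a | _].
have inj : {in Y &, injective (fun y => a :\: y)}.
  move=> y1 y2; rewrite !inE => /andP [/andP [y1a _] _] /andP [/andP [y2a _] _] e.
  by rewrite -(setDDs y1a) -(setDDs y2a) e.
rewrite -(card_in_imset inj).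
apply: (@leq_trans #|[set V : {set T} | (V \subset a :\: z) && (#|V| == 2 * r)]|).
  apply: subset_leq_card; apply/subsetP => V /imsetP [y].
  rewrite !inE => /andP [/andP [ya /eqP hy] zv] ->.
  rewrite cardsDS // (A_lev aA) hy.
  apply/andP; split; last by apply/eqP; lia.
  apply/subsetP => e; rewrite !inE => /andP [ey ea]; rewrite ea andbT.
  apply/negP => ez.
  have := subsetP zv e ez; rewrite !inE (negbTE ey) /= ea //.
rewrite cards_draws.
have ha : #|a :\: z| <= 3 * r.
  have h1 : z \subset (a :&: z) :|: (x :\: a).
    apply/subsetP => e ez; rewrite !inE ez andbT.
    by case: (boolP (e \in a)) => //= _; rewrite (subsetP zx _ ez).
  have := subset_leq_card h1.
  have := cardsU (a :&: z) (x :\: a).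
  rewrite cardsDS // hx cardsD (A_lev aA) hz.
  have := subset_leq_card (subsetIl a z); rewrite (A_lev aA).
  lia.
apply: leq_trans (leq_bin2l _ ha) _.
have -> : 2 * r = 3 * r - r by lia.
by rewrite bin_sub //; lia.
Qed.

Lemma F3b (a : {set T}) : a \in A ->
  'C(l + r, r) * \sum_(y in Ya a) \sum_(x in Xa a) (good a y x : nat)
  <= 'C(3 * r, r) * \sum_(x in Xa a) #|[set z in U | z \subset x]|.
Proof.
move=> aA.
apply: (@leq_trans (\sum_(y in Ya a) \sum_(x in Xa a) \sum_(z in U) (z \subset y :|: (x :\: a) : nat))).
  rewrite big_distrr /=; apply: leq_sum => y; rewrite inE => /andP [ya /eqP hy].
  rewrite big_distrr /=; apply: leq_sum => x; rewrite inE => /andP [/eqP hx ax].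
  case: (boolP (good a y x)) => hg /=; last by rewrite muln0.
  move: hg => /existsP [s /andP [sS vs]].
  rewrite muln1 sumb.
  have hv := card_v aA ya hy hx ax.
  have -> : 'C(l + r, r) = #|[set z : {set T} | (z \subset y :|: (x :\: a)) && (#|z| == l)]|.
    rewrite cards_draws hv.
    rewrite -bin_sub; last by lia.
    congr 'C(_, _); lia.
  apply: subset_leq_card; apply/subsetP => z; rewrite in_set => /andP [zv /eqP hz].
  apply/setIdP; split => //; apply/setUP; left.
  apply: (@in_shadow (3 * r) k S s z) => //; first exact: (subset_trans zv vs).
    exact: S_lev.
  rewrite hz; lia.
rewrite exchange_big /= big_distrr /=; apply: leq_sum => x xX.
rewrite exchange_big /= -sumb big_distrr /=; apply: leq_sum => z zU.
exact: keyK.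
Qed.

Lemma F3c : \sum_(a in A) \sum_(x in Xa a) #|[set z in U | z \subset x]|
  <= \sum_(y in U) deg Sc y.
Proof.
have -> : \sum_(y in U) deg Sc y = \sum_(x in Sc) #|[set z in U | z \subset x]|.
  by rewrite /deg exchange_big /=; apply: eq_bigr => x _; rewrite sumb.
rewrite (eq_bigr (fun a : {set T} => \sum_(x : {set T}) (x \in Xa a) * #|[set z in U | z \subset x]|)); last by move=> a _; rewrite sum_in.
rewrite exchange_big /= sum_in; apply: leq_sum => x _.
rewrite -big_distrl /= sumb leq_mul2r; apply/orP; right.
case: (boolP (x \in Sc)) => xSc.
  apply/card_le1_eqP => a b; rewrite !inE => /andP [aA /andP [/eqP hx ax]] /andP [bA /andP [_ bx]].
  exact: (uniq_x bA aA bx ax hx).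
rewrite leqn0 cards_eq0; apply/eqP/setP => a; rewrite !inE.
apply/negbTE/negP => /andP [aA /andP [/eqP hx ax]].
move: xSc; rewrite !inE hx eqxx andbT => /negP; apply.
exact: (x_nS aA ax hx).
Qed.

Lemma main_nat :
  2 * (2 * r) ^ (3 * r) * #|S| + n ^ r * #|A| <= 2 * (2 * r) ^ (3 * r) * #|U|.
Proof.
set K := (2 * r) ^ (3 * r).
set e := \sum_(y in U) deg Sc y.
set X := \sum_(a in A) \sum_(y in Ya a) deg Sc y.
set Tt := \sum_(a in A) \sum_(y in Ya a) deg S y.
set M := 'C(k - r, 2 * r).
set g := 'C(2 * r, r).
set d := 'C(l + r, r).
set C2 := 'C(n - l - r, 2 * r).
set C3 := 'C(3 * r, r).
have hF1 := F1; have hF2 := F2; have hF3 := F3.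
have hH : d * Tt <= C2 * C3 * e.
  rewrite /Tt big_distrr /=.
  apply: (@leq_trans (\sum_(a in A) C2 * C3 * \sum_(x in Xa a) #|[set z in U | z \subset x]|)).
    apply: leq_sum => a aA.
    have h1 := F3a aA; have h2 := F3b aA.
    rewrite -mulnA; apply: (leq_trans (leq_mul (leqnn d) h1)).
    rewrite mulnCA leq_mul2l h2 orbT //.
  by rewrite -big_distrr /= leq_mul2l F3c orbT.
have n4 := num4 hr hkn2.
have n5 := num5 hr hkn2.
have hC2 : C2 <= M by apply: leq_bin2l; lia.
have hML : 'C(k - r, l) = M by rewrite /M -bin_sub; [congr 'C(_, _); lia | lia].
have hkl : E <= 'C(k, l).
  rewrite -[X in _ <= X]bin_sub; last by lia.
  have -> : k - l = 3 * r by lia.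
  apply: leq_bin2l; lia.
have Epos : 0 < E by rewrite bin_gt0; lia.
have Mpos : 0 < M by rewrite bin_gt0; lia.
have gpos : 0 < g by rewrite bin_gt0; lia.
have dpos : 0 < d by rewrite bin_gt0; lia.
rewrite hML in hF2.
have hX : n ^ r * X <= K * M * e.
  have a1 : n ^ r * X <= n ^ r * X * g by rewrite leq_pmulr.
  have a2 := leq_mul (leqnn (n ^ r)) hF3.
  have a3 := leq_mul n4 (leqnn e).
  lia.
have hT : n ^ r * Tt <= K * M * e.
  rewrite -(leq_pmul2r dpos).
  have a2 := leq_mul (leqnn (n ^ r)) hH.
  have a3 := leq_mul (leq_mul hC2 n5) (leqnn e).
  lia.
have hAE : n ^ r * #|A| * E <= 2 * K * e.
  rewrite -(leq_pmul2r Mpos).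
  have : n ^ r * (X + Tt) <= 2 * (K * M * e) by rewrite mulnDr; lia.
  rewrite hF2; lia.
rewrite -(leq_pmul2r Epos).
have hUE : #|S| * E <= #|S| * 'C(k, l) by rewrite leq_mul2l hkl orbT.
have := leq_mul (leqnn (2 * K)) hUE.
move: hF1 hAE; set sU := #|U|; set sS := #|S|; set sA := #|A|; set Ckl := 'C(k, l).
nia.
Qed.

End Comb.

Import Order.TTheory GRing.Theory Num.Theory.
Local Open Scope ring_scope.

Theorem lemma3 (n r k : nat) (S A : {set {set 'I_n}}) :
  (1 <= n)%N -> (1 <= r)%N -> (8 * r <= n)%N ->
  ((n%:R / 2 + 3 * r%:R : rat) <= k%:R) -> ((k%:R : rat) <= 3 * n%:R / 4) ->
  S \subset binom n k ->
  A \subset binom n (k - r) :\: shadow r S ->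
  dist_code (2 * r + 1) A ->
  (#|shadow (3 * r) S :|: shadow (2 * r) A|%:R : rat) >=
    #|S|%:R + (n%:R ^+ r * #|A|%:R) / (4 * (2 * r)%:R ^+ (3 * r)).
Proof.
move=> hn hr h8 hk1 hk2 hS hA hc.
have hkn2 : (n + 6 * r <= 2 * k)%N.
  have : ((n + 6 * r)%:R <= (2 * k)%:R :> rat) by rewrite natrD !natrM; lra.
  by rewrite ler_nat.
have hkn : (k <= n)%N.
  have : ((4 * k)%:R <= (3 * n)%:R :> rat) by rewrite !natrM; lra.
  rewrite ler_nat; lia.
have hm := main_nat hr hkn2 hkn hS hA hc.
set K := ((2 * r) ^ (3 * r))%N in hm.
set U := (shadow (3 * r) S :|: shadow (2 * r) A) in hm *.
have h4 : (4 * K * #|S| + n ^ r * #|A| <= 4 * K * #|U|)%N by lia.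
have h' : ((4 * K * #|S| + n ^ r * #|A|)%:R <= (4 * K * #|U|)%:R :> rat) by rewrite ler_nat.
rewrite natrD !natrM natrX in h'.
have Kpos : (0 < K)%N by rewrite expn_gt0; lia.
have cpos : (0 : rat) < 4 * (2 * r)%:R ^+ (3 * r).
  by rewrite -natrX -[4]/(4%:R) -natrM ltr0n; lia.
rewrite -lerBrDl ler_pdivrMr // -natrX -/K.
rewrite natrX in h'.
rewrite natrX; nra.
Qed.
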